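(* Let $R$ satisfy $\{0\}\subsetneq R\subseteq\mathbb Q$ and $r\cdot\mathbb Z\subseteq R$ for every $r\in R$, and let $m\in(\mathbb Z\setminus\{0\})\cap R$. Then for every $b\in R$: $b\neq 0$ if and only if the equation \[ y\cdot b-m^2-\sum_{i=1}^4 y_i^2=0 \] is solvable in $y,y_1,y_2,y_3,y_4\in R$. *)

(* Defs.v *)
From HB Require Import structures.
From mathcomp Require Import all_boot all_order all_algebra.
Set Implicit Arguments. Unset Strict Implicit. Unset Printing Implicit Defensive.
Import Order.TTheory GRing.Theory Num.Theory.

(* Main.v *)
Require Import Defs.
From HB Require Import structures.
From mathcomp Require Import all_boot all_order all_algebra.
From mathcomp Require Import zify ring lra.
Set Implicit Arguments. Unset Strict Implicit. Unset Printing Implicit Defensive.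
Import Order.TTheory GRing.Theory Num.Theory.

Definition S4 (x y z w : nat) := (x ^ 2 + y ^ 2 + z ^ 2 + w ^ 2 + 1)%N.
Definition P4 (n : nat) := exists x y z w, (n %| S4 x y z w)%N.

Lemma S4_shift x y z w d : S4 (x + d) y z w = (S4 x y z w + d * (2 * x + d))%N.
Proof. rewrite /S4; ring. Qed.

Lemma add_mod d a b a' b' : a = a' %[mod d] -> b = b' %[mod d] -> a + b = a' + b' %[mod d].
Proof. by move=> Ha Hb; rewrite -modnDm Ha Hb modnDm. Qed.

Lemma sq_mod d a a' : a = a' %[mod d] -> a ^ 2 = a' ^ 2 %[mod d].
Proof. by move=> Ha; rewrite -modnXm Ha modnXm. Qed.

Lemma S4_mod d x y z w x' y' z' w' : x = x' %[mod d] -> y = y' %[mod d] ->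
  z = z' %[mod d] -> w = w' %[mod d] -> S4 x y z w = S4 x' y' z' w' %[mod d].
Proof.
move=> hx hy hz hw; rewrite /S4.
by do 4?apply: add_mod => //; apply: sq_mod.
Qed.

Lemma P4_mul a b : coprime a b -> P4 a -> P4 b -> P4 (a * b).
Proof.
move=> cab [x1 [y1 [z1 [w1 h1]]]] [x2 [y2 [z2 [w2 h2]]]].
exists (chinese a b x1 x2), (chinese a b y1 y2), (chinese a b z1 z2), (chinese a b w1 w2).
rewrite Gauss_dvd //; apply/andP; split.
  by rewrite /dvdn (S4_mod (chinese_modl cab _ _) (chinese_modl cab _ _) (chinese_modl cab _ _) (chinese_modl cab _ _)).
by rewrite /dvdn (S4_mod (chinese_modr cab _ _) (chinese_modr cab _ _) (chinese_modr cab _ _) (chinese_modr cab _ _)).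
Qed.
Lemma sq_inj p a b : prime p -> (2 * a < p)%N -> (2 * b < p)%N ->
  a ^ 2 = b ^ 2 %[mod p] -> a = b.
Proof.
move=> pp.
wlog lab : a b / (a <= b)%N.
  move=> H ha hb e; case: (leqP a b) => l; first exact: H.
  by symmetry; apply: H => //; apply: ltnW.
move=> ha hb e; case: (ltngtP a b) => [l|l|//]; last lia.
have: (p %| b ^ 2 - a ^ 2)%N.
  rewrite -eqn_mod_dvd; first by rewrite e.
  by rewrite leq_exp2r.
rewrite subn_sqr Euclid_dvdM // => /orP [] /dvdn_leq; lia.
Qed.

Lemma cancel_pm1 p A B : (1 < p)%N -> p.-1 * A = p.-1 * B %[mod p] -> A = B %[mod p].
Proof.
move=> p1 e.
have k: forall C, C = p.-1 * (p.-1 * C) %[mod p].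
  move=> C; have ->: (p.-1 * (p.-1 * C) = (p.-2 * C) * p + C)%N.
    by case: (p) p1 => [|[|q]] // _ /=; ring.
  by rewrite modnMDl.
by rewrite (k A) -modnMmr e modnMmr -k.
Qed.

Lemma odd_prime_sq p : prime p -> odd p -> exists x y, (p %| x ^ 2 + y ^ 2 + 1)%N.
Proof.
move=> pp op.
have p0 : (0 < p)%N by apply: prime_gt0.
have p1 : (1 < p)%N by apply: prime_gt1.
set h := p./2.
have hp : p = h.*2.+1 by rewrite -[LHS]odd_double_half op.
pose f (u : ('I_h.+1 + 'I_h.+1)%type) : 'I_p :=
  match u with
  | inl x => Ordinal (ltn_pmod (x ^ 2) p0)
  | inr y => Ordinal (ltn_pmod (p.-1 * (y ^ 2 + 1)) p0)
  end.
have: ~~ injectiveb f.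
  apply/negP => /injectiveP/leq_card; rewrite card_sum !card_ord; lia.
have cross: forall x y : nat, x ^ 2 = p.-1 * (y ^ 2 + 1) %[mod p] ->
   (p %| x ^ 2 + y ^ 2 + 1)%N.
  move=> x y e; rewrite /dvdn -addnA -modnDml e modnDml.
  have ->: (p.-1 * (y ^ 2 + 1) + (y ^ 2 + 1) = (y ^ 2 + 1) * p)%N.
    by case: (p) p1 => [|q] //= _; ring.
  by rewrite modnMl.
have bd : forall u : 'I_h.+1, (2 * u < p)%N.
  by move=> u; have := ltn_ord u; lia.
case/injectivePn => u [v ne e]; case: u v ne e => [x|y] [x'|y'] ne e.
- move/(congr1 val): e => /= e.
  by move: ne; rewrite (ord_inj (sq_inj pp (bd x) (bd x') e)) eqxx.
- by exists x, y'; apply: cross; move/(congr1 val): e.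
- by exists x', y; apply: cross; move/(congr1 val): e => /= ->.
- move/(congr1 val): e => /= /(cancel_pm1 p1) e.
  have e2 : y ^ 2 = y' ^ 2 %[mod p] by apply/eqP; rewrite -(eqn_modDr 1); apply/eqP.
  by move: ne; rewrite (ord_inj (sq_inj pp (bd y) (bd y') e2)) eqxx.
Qed.

Lemma hensel_odd p e x y z w : prime p -> odd p -> ~~ (p %| x)%N ->
  (p ^ e.+1 %| S4 x y z w)%N -> exists x', ~~ (p %| x')%N /\ (p ^ e.+2 %| S4 x' y z w)%N.
Proof.
move=> pp op px /dvdnP [c hc].
have p0 : (0 < p)%N by apply: prime_gt0.
have cp : coprime p (2 * x).
  rewrite prime_coprime // Euclid_dvdM // negb_or px andbT.
  apply/negP => /dvdn_leq /= h; have := prime_gt1 pp.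
  move=> h2; move: op h h2; case: (p) => [|[|[|q]]] //= _ /(_ isT); lia.
have [a _ ha] := Bezoutl (2 * x) p0.
rewrite (eqP cp) in ha.
exists (x + a * c * p ^ e.+1); split.
  by rewrite dvdn_addl // dvdn_mull // dvdn_exp.
rewrite S4_shift hc.
have ->: (c * p ^ e.+1 + a * c * p ^ e.+1 * (2 * x + a * c * p ^ e.+1) =
   p ^ e.+1 * (c * (1 + a * (2 * x)) + (a * c) ^ 2 * p ^ e.+1))%N by ring.
rewrite expnS (mulnC p) dvdn_pmul2l ?expn_gt0 ?p0 //.
by rewrite dvdn_add // ?dvdn_mull // dvdn_exp.
Qed.

Lemma lift2 e x y z w : odd x -> (2 ^ e.+3 %| S4 x y z w)%N ->
  exists x', odd x' /\ (2 ^ e.+4 %| S4 x' y z w)%N.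
Proof.
move=> ox /dvdnP [c hc].
case oc: (odd c).
  exists (x + 2 ^ e.+2); split; first by rewrite oddD oddX /= ox.
  rewrite S4_shift hc.
  have ->: (c * 2 ^ e.+3 + 2 ^ e.+2 * (2 * x + 2 ^ e.+2) =
     2 ^ e.+3 * (c + x + 2 ^ e.+1))%N by rewrite !expnS; ring.
  rewrite (expnS 2 e.+3) (mulnC 2) dvdn_pmul2l ?expn_gt0 //.
  by rewrite dvdn2 !oddD oddX /= oc ox.
exists x; split => //; rewrite hc (expnS 2 e.+3) dvdn_pmul2r ?expn_gt0 //.
by rewrite dvdn2 oc.
Qed.

Lemma P4_pow p e : prime p -> P4 (p ^ e).
Proof.
move=> pp; case: (even_prime pp) => [->|op].
  have h: forall k, exists x y z w, odd x /\ (2 ^ k.+3 %| S4 x y z w)%N.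
    elim=> [|k [x [y [z [w [ox hx]]]]]]; first by exists 1%N, 1%N, 1%N, 2%N.
    by have [x' [ox' hx']] := lift2 ox hx; exists x', y, z, w.
  case: (leqP e 3) => le.
    exists 1%N, 1%N, 1%N, 2%N; apply: (@dvdn_trans (2 ^ 3)); last by [].
    by rewrite dvdn_exp2l.
  have [x [y [z [w [_ hx]]]]] := h (e - 3)%N.
  by exists x, y, z, w; have <-: ((e - 3).+3 = e)%N by lia.
case: e => [|e]; first by exists 0%N, 0%N, 0%N, 0%N; rewrite expn0 dvd1n.
suff: exists x y z w, ~~ (p %| x)%N /\ (p ^ e.+1 %| S4 x y z w)%N.
  by case=> x [y [z [w [_ h]]]]; exists x, y, z, w.
elim: e => [|k [x [y [z [w [px hx]]]]]]; last first.
  by have [x' [px' hx']] := hensel_odd pp op px hx; exists x', y, z, w.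
have [x [y h]] := odd_prime_sq pp op.
case px: (p %| x)%N.
  exists y, x, 0%N, 0%N; split.
    apply/negP => py; move: h; rewrite dvdn_addr ?dvdn_add ?dvdn_exp //.
    by rewrite dvdn1 => /eqP p1; move: (prime_gt1 pp); rewrite p1.
  by rewrite expn1 /S4 addn0 addn0 (addnC (y ^ 2)).
by exists x, y, 0%N, 0%N; rewrite px expn1 /S4 !addn0.
Qed.

Lemma P4_all n : (0 < n)%N -> P4 n.
Proof.
elim/ltn_ind: n => n IH n0.
case: (leqP n 1) => n1.
  have -> : n = 1%N by lia.
  by exists 0%N, 0%N, 0%N, 0%N; rewrite dvd1n.
have pp := pdiv_prime n1.
have [n' cp en] := pfactor_coprime pp n0.
have lg : (0 < logn (pdiv n) n)%N by rewrite logn_gt0 mem_primes pp n0 pdiv_dvd.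
have pe : (2 <= pdiv n ^ logn (pdiv n) n)%N.
  apply: (leq_trans (prime_gt1 pp)).
  rewrite -{1}(expn1 (pdiv n)); exact: leq_pexp2l (prime_gt0 pp) lg.
suff: P4 (n' * pdiv n ^ logn (pdiv n) n) by rewrite -en.
apply: P4_mul.
- by rewrite coprime_sym coprimeXl.
- have n'0 : (0 < n')%N by move: n0; rewrite en; case: (n') => //; rewrite mul0n.
  apply: IH => //; move: pe en; set P := pdiv n ^ _ => pe en.
  rewrite {1}en; nia.
- exact: P4_pow.
Qed.

Local Open Scope ring_scope.

Lemma natz_intr (n : nat) : ((n%:Z)%:~R : rat) = n%:R.
Proof. by []. Qed.

Theorem lemma4 (R : rat -> Prop)
  (hR0 : R 0) (hRnz : exists r : rat, R r /\ r != 0)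
  (hRZ : forall (r : rat) (z : int), R r -> R (r * z%:~R))
  (m : int) (hm0 : m != 0) (hmR : R (m%:~R)) :
  forall b : rat, R b ->
    (b != 0 <->
     exists y y1 y2 y3 y4 : rat,
       [/\ R y, R y1, R y2, R y3 & R y4] /\
       y * b - (m%:~R) ^+ 2 - (y1 ^+ 2 + y2 ^+ 2 + y3 ^+ 2 + y4 ^+ 2) = 0).
Proof.
move=> b hb; split; last first.
  case=> [y [y1 [y2 [y3 [y4 [_ e]]]]]]; apply/negP => /eqP b0.
  move: e; rewrite b0 mulr0.
  have M0 : (m%:~R : rat) != 0 by rewrite intr_eq0.
  have h0 : 0 < (m%:~R : rat) ^+ 2 by rewrite lt_def sqrf_eq0 M0 sqr_ge0.
  have := sqr_ge0 y1; have := sqr_ge0 y2; have := sqr_ge0 y3; have := sqr_ge0 y4.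
  lra.
move=> b0.
have nb0 : numq b != 0 by rewrite numq_eq0.
have p0 : (0 < `|numq b|)%N by rewrite absz_gt0.
have [x [y [z [w hd]]]] := P4_all p0.
have : (numq b %| (S4 x y z w)%:Z)%Z by rewrite dvdzE.
case/dvdzP => c hc.
have hN : (c%:~R * (numq b)%:~R : rat) =
   ((x%:Z)%:~R) ^+ 2 + ((y%:Z)%:~R) ^+ 2 + ((z%:Z)%:~R) ^+ 2 + ((w%:Z)%:~R) ^+ 2 + 1.
  by rewrite -intrM -hc /S4 !natz_intr !natrD !natrX.
have D0 : ((denq b)%:~R : rat) != 0 by rewrite intr_eq0 denq_neq0.
exists (m%:~R * (m * c * denq b)%:~R), (m%:~R * (x%:Z)%:~R), (m%:~R * (y%:Z)%:~R),
  (m%:~R * (z%:Z)%:~R), (m%:~R * (w%:Z)%:~R); split; first by split; apply: hRZ.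
rewrite !intrM.
have key : forall B : rat, B = (numq b)%:~R / (denq b)%:~R ->
  m%:~R * ((m%:~R * c%:~R) * (denq b)%:~R) * B = m%:~R ^+ 2 * (c%:~R * (numq b)%:~R).
  by move=> B ->; field.
rewrite (key b (esym (divq_num_den b))).
rewrite hN; ring.
Qed.
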